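(* Let $(U,<)$ be a linear order and $\bar u=(u_\beta)_{\beta<\alpha}$ a sequence of elements of $U$. Then $\bar u$ is densely non-increasing if and only if for all ordinals $\beta'<\beta<\alpha$ the following two statements hold: (i) if $\beta=\beta'+1$ then $u_{\beta'}\ge u_\beta$; (ii) if $\beta$ is a limit ordinal and $\bar u$ is constant on $[\beta',\beta)$, then $u_{\beta'}\ge u_\beta$.
   Context: A sequence $(u_\beta)_{\beta<\alpha}$ (indexed by a countable ordinal $\alpha$) is constant on $[\gamma,\gamma')$ if $u_\beta=u_\gamma$ for all $\gamma\le\beta<\gamma'$. It is densely non-increasing if for all $\gamma<\gamma'\le\alpha$, either it is constant on $[\gamma,\gamma')$ or there exist $\gamma\le\beta<\beta'<\gamma'$ with $u_\beta>u_{\beta'}$. *)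

(* Defs.v *)
From mathcomp Require Import all_boot all_order.
Set Implicit Arguments. Unset Strict Implicit. Unset Printing Implicit Defensive.
Import Order.TTheory.
Local Open Scope order_scope.

(* An ordinal alpha is represented by a well-ordered type I of the ordinals
   beta < alpha; an upper bound gamma' <= alpha is an [option I], with [None]
   standing for alpha itself. *)
Section Defs.
Context {d : Order.disp_t} {I : orderType d} {dU : Order.disp_t} {U : orderType dU}.

Definition lt_bound (b : I) (g' : option I) : Prop :=
  match g' with None => True | Some g => b < g end.

Definition constant_on (u : I -> U) (g : I) (g' : option I) : Prop :=
  forall b : I, g <= b -> lt_bound b g' -> u b = u g.

Definition densely_nonincreasing (u : I -> U) : Prop :=
  forall (g : I) (g' : option I), lt_bound g g' ->
    constant_on u g g' \/
    exists b b' : I, [/\ g <= b, b < b', lt_bound b' g' & u b' < u b].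

Definition is_succ_of (b' b : I) : Prop :=
  b' < b /\ forall c : I, ~ (b' < c /\ c < b).

Definition is_limit (b : I) : Prop :=
  (exists c : I, c < b) /\ ~ (exists b' : I, is_succ_of b' b).
End Defs.

(* Main.v *)
Require Import Defs.
From mathcomp Require Import all_boot all_order.
From Stdlib Require Import Classical.
Import Order.TTheory.
Local Open Scope order_scope.

Section Aux.
Context {d : Order.disp_t} {I : orderType d} {dU : Order.disp_t} {U : orderType dU}.

Lemma ex_min_wf (wf : well_founded (fun x y : I => x < y)) (P : I -> Prop) :
  (exists c, P c) -> exists c, P c /\ forall e, P e -> c <= e.
Proof.
move=> [c0 Pc0]; apply: NNPP => H.
have key : forall c, ~ P c.
  move=> c; elim: (wf c) => {}c _ IH Pc; apply: H; exists c; split=> // e Pe.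
  rewrite leNgt; apply/negP => ec; exact: (IH e ec Pe).
exact: (key c0 Pc0).
Qed.

Lemma fwd_key (wf : well_founded (fun x y : I => x < y)) (u : I -> U) b' b :
  densely_nonincreasing u -> b' < b -> constant_on u b' (Some b) -> u b <= u b'.
Proof.
move=> dni bb' cst.
have [g' [Hb Hle]] : exists g' : option I, lt_bound b g' /\ forall c, lt_bound c g' -> c <= b.
  case: (classic (exists c, b < c)) => [ex|nex].
    have [m [bm mmin]] := ex_min_wf wf (fun c => b < c) ex.
    exists (Some m); split=> // c /= cm.
    rewrite leNgt; apply/negP => bc; have := mmin c bc; rewrite leNgt cm //.
  exists None; split=> // c _; rewrite leNgt; apply/negP => bc; apply: nex; by exists c.
have Hg : lt_bound b' g' by case: g' Hb Hle => [m|] //= bm _; exact: lt_trans bb' bm.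
case: (dni b' g' Hg) => [C|[x [y [xb xy yg uyx]]]].
  by rewrite (C b (ltW bb') Hb).
have yb := Hle y yg.
move: yb; rewrite le_eqVlt => /orP [/eqP eyb|yb].
  subst y; rewrite -(cst x xb xy); exact: ltW.
have xb2 : x < b := lt_trans xy yb.
have := cst x xb xb2; have := cst y (le_trans xb (ltW xy)) yb.
by move=> e1 e2; move: uyx; rewrite e1 e2 ltxx.
Qed.
End Aux.

Theorem mainTheorem6 (d : Order.disp_t) (I : orderType d)
  (wf : well_founded (fun x y : I => x < y))
  (cnt : exists f : I -> nat, injective f)
  (dU : Order.disp_t) (U : orderType dU) (u : I -> U) :
  densely_nonincreasing u <->
  (forall b' b : I, b' < b ->
     (is_succ_of b' b -> u b <= u b') /\
     (is_limit b -> constant_on u b' (Some b) -> u b <= u b')).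
Proof.
split.
  move=> dni b' b bb'; split; last by move=> _; exact: fwd_key.
  move=> [_ nbet]; apply: fwd_key => // c b'c /= cb.
  move: b'c; rewrite le_eqVlt => /orP [/eqP -> //|b'c].
  by exfalso; apply: (nbet c).
move=> H g g' gg'.
case: (classic (exists b b' : I, [/\ g <= b, b < b', lt_bound b' g' & u b' < u b])) => [ex|nex]; first by right.
left.
have mono : forall x y, g <= x -> x < y -> lt_bound y g' -> u x <= u y.
  move=> x y gx xy yg; rewrite leNgt; apply/negP => uyx; apply: nex.
  by exists x, y; split.
have ltb : forall c b, c < b -> lt_bound b g' -> lt_bound c g'.
  by case: g' {gg' nex mono} => [m|] //= c b cb bm; exact: lt_trans cb bm.
move=> b; elim: (wf b) => {}b _ IH gb bg.
move: gb; rewrite le_eqVlt => /orP [/eqP -> //|gb].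
apply/eqP; rewrite eq_le; apply/andP; split; last exact: mono.
case: (classic (exists b', is_succ_of b' b)) => [[b' [b'b nbet]]|nsucc].
  have gb' : g <= b'.
    rewrite leNgt; apply/negP => b'g; apply: (nbet g); split=> //.
  rewrite -(IH b' b'b gb' (ltb _ _ b'b bg)).
  exact: (proj1 (H b' b b'b)) (conj b'b nbet).
apply: (proj2 (H g b gb)); first by split=> //; exists g.
move=> c gc /= cb; exact: IH cb gc (ltb _ _ cb bg).
Qed.
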